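(* Let $0<\lambda<1$, $0<\beta<1$, and let $\mathcal{A}$ be the (not necessarily unital) associative subalgebra of $\operatorname{End}(\mathcal{B}'(\lambda,\beta))\cong M_4(\mathbb{R})$ generated by the left multiplication operators $l_o,l_a,l_b$. Then: 1. if $\lambda=\beta=\tfrac12$, then $\mathcal{A}=M_0$; 2. if $\lambda\neq\beta$ and $\lambda=1-\beta$, then $\mathcal{A}=M_1$; 3. if $\lambda=\beta$ and $\lambda\neq1-\beta$, then $\mathcal{A}=M_2$; 4. if $\lambda\neq\beta$ and $\lambda\neq1-\beta$, then $\mathcal{A}=M_3$.
   Context: For real parameters $0<\lambda<1$ and $0<\beta<1$, $\mathcal{B}'(\lambda,\beta)$ denotes the commutative (non-associative) $4$-dimensional real algebra with basis $\{o,a,b,c\}$ whose bilinear commutative multiplication $\circ$ is determined by $o\circ o=o$, $o\circ a=\lambda a$, $o\circ b=\lambda b$, $a\circ a=a$, $b\circ b=b$, $a\circ b=\frac{\lambda-\beta}{\lambda}a+\frac{\lambda+\beta-1}{\lambda}b+c$, and $c\circ x=x\circ c=0$ for every $x$. (In the paper the basis vector $c$ is written $ab$.) For $x$ in the algebra, $l_x(y)=x\circ y$; operators are identified with $4\times4$ real matrices with respect to the ordered basis $(o,a,b,c)$, the $j$-th column being the coordinate vector of the image of the $j$-th basis vector. Thus $l_o=E_{11}+\lambda E_{22}+\lambda E_{33}$, $l_a=\lambda E_{21}+E_{22}+\frac{\lambda-\beta}{\lambda}E_{23}+\frac{\lambda+\beta-1}{\lambda}E_{33}+E_{43}$, $l_b=\frac{\lambda-\beta}{\lambda}E_{22}+\lambda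 E_{31}+\frac{\lambda+\beta-1}{\lambda}E_{32}+E_{33}+E_{42}$, where $E_{ij}$ are matrix units. Define the subspaces of $M_4(\mathbb{R})$: $M_0=\operatorname{span}\{E_{11},E_{21},E_{22},E_{31},E_{33},E_{41},E_{42},E_{43}\}$, $M_1=M_0+\mathbb{R}E_{23}$, $M_2=M_0+\mathbb{R}E_{32}$, $M_3=M_0+\mathbb{R}E_{23}+\mathbb{R}E_{32}$. *)

(* Defs.v *)
(* real numbers rendered as an arbitrary realFieldType R
   (the statement is purely algebraic). *)
From HB Require Import structures.
From mathcomp Require Import all_boot all_order all_algebra.
Set Implicit Arguments. Unset Strict Implicit. Unset Printing Implicit Defensive.
Import Order.TTheory GRing.Theory Num.Theory.
Local Open Scope ring_scope.

(* Matrix unit E_ij with 1-based indices i, j in {1,...,4}. *)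
Definition E (R : realFieldType) (i j : nat) : 'M[R]_4 :=
  delta_mx (inord i.-1) (inord j.-1).

(* Left multiplication operators of B'(lam, bet) w.r.t. basis (o,a,b,c). *)
Definition l_o (R : realFieldType) (lam : R) : 'M[R]_4 :=
  E R 1 1 + lam *: E R 2 2 + lam *: E R 3 3.

Definition l_a (R : realFieldType) (lam bet : R) : 'M[R]_4 :=
  lam *: E R 2 1 + E R 2 2 + ((lam - bet) / lam) *: E R 2 3
  + ((lam + bet - 1) / lam) *: E R 3 3 + E R 4 3.

Definition l_b (R : realFieldType) (lam bet : R) : 'M[R]_4 :=
  ((lam - bet) / lam) *: E R 2 2 + lam *: E R 3 1
  + ((lam + bet - 1) / lam) *: E R 3 2 + E R 3 3 + E R 4 2.

Inductive gen_alg (R : realFieldType) (S : 'M[R]_4 -> Prop) : 'M[R]_4 -> Prop :=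
| ga_gen A : S A -> gen_alg S A
| ga_add A B : gen_alg S A -> gen_alg S B -> gen_alg S (A + B)
| ga_scale (c : R) A : gen_alg S A -> gen_alg S (c *: A)
| ga_mul A B : gen_alg S A -> gen_alg S B -> gen_alg S (A *m B).

Definition gens (R : realFieldType) (lam bet : R) (A : 'M[R]_4) : Prop :=
  A = l_o lam \/ A = l_a lam bet \/ A = l_b lam bet.

Definition inM0 (R : realFieldType) (A : 'M[R]_4) : Prop :=
  exists c1 c2 c3 c4 c5 c6 c7 c8 : R,
    A = c1 *: E R 1 1 + c2 *: E R 2 1 + c3 *: E R 2 2 + c4 *: E R 3 1
      + c5 *: E R 3 3 + c6 *: E R 4 1 + c7 *: E R 4 2 + c8 *: E R 4 3.

Definition inM1 (R : realFieldType) (A : 'M[R]_4) : Prop :=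
  exists (B : 'M[R]_4) (d : R), inM0 B /\ A = B + d *: E R 2 3.

Definition inM2 (R : realFieldType) (A : 'M[R]_4) : Prop :=
  exists (B : 'M[R]_4) (d : R), inM0 B /\ A = B + d *: E R 3 2.

Definition inM3 (R : realFieldType) (A : 'M[R]_4) : Prop :=
  exists (B : 'M[R]_4) (d e : R), inM0 B /\ A = B + d *: E R 2 3 + e *: E R 3 2.

(* Main.v *)
Require Import Defs.
From HB Require Import structures.
From mathcomp Require Import all_boot all_order all_algebra.
From mathcomp Require Import ring lra.
Set Implicit Arguments. Unset Strict Implicit.
Import Order.TTheory GRing.Theory Num.Theory.
Local Open Scope ring_scope.

Lemma eqi (x : 'I_4) k : (k < 4)%N -> (x == inord k) = (nat_of_ord x == k).
Proof. by move=> hk; rewrite -val_eqE /= inordK. Qed.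

Lemma ordI k (h : (k < 4)%N) : (Ordinal h : 'I_4) = inord k.
Proof. by apply: val_inj; rewrite /= inordK. Qed.

Lemma sum4 (R : realFieldType) (F : 'I_4 -> R) :
  \sum_(k < 4) F k = F (inord 0) + F (inord 1) + F (inord 2) + F (inord 3).
Proof.
have e0 : (ord0 : 'I_4) = inord 0 by apply: val_inj; rewrite /= inordK.
have e1 : (lift ord0 ord0 : 'I_4) = inord 1 by apply: val_inj; rewrite /= inordK.
have e2 : (lift ord0 (lift ord0 ord0) : 'I_4) = inord 2 by apply: val_inj; rewrite /= inordK.
have e3 : (lift ord0 (lift ord0 (lift ord0 ord0)) : 'I_4) = inord 3 by apply: val_inj; rewrite /= inordK.
by rewrite !big_ord_recl big_ord0 addr0 !addrA e3 e2 e1 e0.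
Qed.

Ltac simp0 := rewrite ?mulr1n ?mulr0n ?(mul0r, mulr0, mul1r, mulr1, addr0, add0r).

Ltac mxsolve := apply/matrixP; intros a b;
  rewrite ?(mxE, sum4);
  rewrite ?eqi // ?inordK //; revert a b;
  case=> [[|[|[|[|?]]]] ?]; case=> [[|[|[|[|?]]]] ?] //=; simp0.

Ltac ent := rewrite ?(mxE, sum4) ?eqi // ?inordK //=; simp0; try done.

Definition Lo (R : realFieldType) (lam : R) := E R 1 1 + lam *: E R 2 2 + lam *: E R 3 3.
Definition La (R : realFieldType) (lam p q : R) :=
  lam *: E R 2 1 + E R 2 2 + p *: E R 2 3 + q *: E R 3 3 + E R 4 3.
Definition Lb (R : realFieldType) (lam p q : R) :=
  p *: E R 2 2 + lam *: E R 3 1 + q *: E R 3 2 + E R 3 3 + E R 4 2.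
Definition Dm (R : realFieldType) := E R 2 2 + E R 3 3.
Definition Xm (R : realFieldType) (p q : R) := E R 2 2 + p *: E R 2 3 + q *: E R 3 3.
Definition Ym (R : realFieldType) (p q : R) := p *: E R 2 2 + q *: E R 3 2 + E R 3 3.

Lemma I1 (R : realFieldType) (lam : R) : 1 - lam != 0 ->
  E R 1 1 = (1/(1-lam)) *: (Lo lam *m Lo lam) + (-lam/(1-lam)) *: Lo lam.
Proof. move=> h; rewrite /Lo; mxsolve; by field. Qed.

Lemma I2 (R : realFieldType) (lam : R) : lam != 0 ->
  Dm R = (1/lam) *: Lo lam + (-1/lam) *: E R 1 1.
Proof. move=> h; rewrite /Lo /Dm; mxsolve; by field. Qed.

Lemma I3 (R : realFieldType) (lam p q : R) : lam != 0 ->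
  E R 2 1 = (1/lam) *: (La lam p q *m E R 1 1).
Proof. move=> h; rewrite /La; mxsolve; by field. Qed.

Lemma I4 (R : realFieldType) (lam p q : R) : lam != 0 ->
  E R 3 1 = (1/lam) *: (Lb lam p q *m E R 1 1).
Proof. move=> h; rewrite /Lb; mxsolve; by field. Qed.

Lemma I5 (R : realFieldType) (lam p q : R) :
  E R 4 1 = 1 *: (La lam p q *m E R 3 1) + 1 *: ((-p) *: E R 2 1 + (-q) *: E R 3 1).
Proof. rewrite /La; mxsolve; ring. Qed.

Lemma I6 (R : realFieldType) (lam p q : R) :
  E R 4 3 = 1 *: (La lam p q *m Dm R) + (-1) *: (Dm R *m La lam p q *m Dm R).
Proof. rewrite /La /Dm; mxsolve; ring. Qed.

Lemma I7 (R : realFieldType) (lam p q : R) :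
  E R 4 2 = 1 *: (Lb lam p q *m Dm R) + (-1) *: (Dm R *m Lb lam p q *m Dm R).
Proof. rewrite /Lb /Dm; mxsolve; ring. Qed.

Lemma IX (R : realFieldType) (lam p q : R) :
  Xm p q = Dm R *m La lam p q *m Dm R.
Proof. rewrite /La /Dm /Xm; mxsolve; ring. Qed.

Lemma IY (R : realFieldType) (lam p q : R) :
  Ym p q = Dm R *m Lb lam p q *m Dm R.
Proof. rewrite /Lb /Dm /Ym; mxsolve; ring. Qed.

Lemma C1a (R : realFieldType) : E R 2 2 = Xm 0 0.
Proof. rewrite /Xm; mxsolve; ring. Qed.
Lemma Cs (R : realFieldType) : E R 3 3 = 1 *: Dm R + (-1) *: E R 2 2.
Proof. rewrite /Dm; mxsolve; ring. Qed.
Lemma Cs' (R : realFieldType) : E R 2 2 = 1 *: Dm R + (-1) *: E R 3 3.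
Proof. rewrite /Dm; mxsolve; ring. Qed.
Lemma C2a (R : realFieldType) (p : R) : p - 1 != 0 ->
  E R 2 2 = (1/(p-1)) *: Ym p 0 + (-1/(p-1)) *: Dm R.
Proof. move=> h; rewrite /Ym /Dm; mxsolve; by field. Qed.
Lemma C2b (R : realFieldType) (p : R) : p != 0 ->
  E R 2 3 = (1/p) *: Xm p 0 + (-1/p) *: E R 2 2.
Proof. move=> h; rewrite /Xm; mxsolve; by field. Qed.
Lemma C3a (R : realFieldType) (q : R) : q - 1 != 0 ->
  E R 3 3 = (1/(q-1)) *: Xm 0 q + (-1/(q-1)) *: Dm R.
Proof. move=> h; rewrite /Xm /Dm; mxsolve; by field. Qed.
Lemma C3b (R : realFieldType) (q : R) : q != 0 ->
  E R 3 2 = (1/q) *: Ym 0 q + (-1/q) *: E R 3 3.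
Proof. move=> h; rewrite /Ym; mxsolve; by field. Qed.
Lemma C4a (R : realFieldType) (p q : R) : p + q - 1 != 0 ->
  E R 2 2 = (-(1-p)/(p+q-1)) *: (1 *: Xm p q + (-q) *: Dm R)
    + (1/(p+q-1)) *: ((1 *: Xm p q + (-q) *: Dm R) *m (1 *: Ym p q + (-p) *: Dm R)).
Proof. move=> h; rewrite /Xm /Ym /Dm; mxsolve; by field. Qed.
Lemma C4b (R : realFieldType) (p q : R) : p != 0 ->
  E R 2 3 = (1/p) *: (1 *: Xm p q + (-q) *: Dm R) + (-(1-q)/p) *: E R 2 2.
Proof. move=> h; rewrite /Xm /Dm; mxsolve; by field. Qed.
Lemma C4c (R : realFieldType) (p q : R) : q != 0 ->
  E R 3 2 = (1/q) *: (1 *: Ym p q + (-p) *: Dm R) + (-(1-p)/q) *: E R 3 3.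
Proof. move=> h; rewrite /Ym /Dm; mxsolve; by field. Qed.


Lemma glc (R : realFieldType) (S : 'M[R]_4 -> Prop) (c1 c2 : R) A B :
  gen_alg S A -> gen_alg S B -> gen_alg S (c1 *: A + c2 *: B).
Proof. by move=> hA hB; apply: ga_add; apply: ga_scale. Qed.

Lemma mem_base (R : realFieldType) (S : 'M[R]_4 -> Prop) (lam p q : R) :
  S (Lo lam) -> S (La lam p q) -> S (Lb lam p q) -> lam != 0 -> 1 - lam != 0 ->
  gen_alg S (E R 1 1) /\ gen_alg S (E R 2 1) /\ gen_alg S (E R 3 1) /\
      gen_alg S (E R 4 1) /\ gen_alg S (E R 4 2) /\ gen_alg S (E R 4 3) /\
  gen_alg S (Dm R) /\ gen_alg S (Xm p q) /\ gen_alg S (Ym p q).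
Proof.
move=> hLo hLa hLb h0 h1.
have gLo : gen_alg S (Lo lam) by apply: ga_gen.
have gLa : gen_alg S (La lam p q) by apply: ga_gen.
have gLb : gen_alg S (Lb lam p q) by apply: ga_gen.
have g11 : gen_alg S (E R 1 1).
  by rewrite (I1 h1); apply: glc => //; apply: ga_mul.
have gD : gen_alg S (Dm R) by rewrite (I2 h0); apply: glc.
have g21 : gen_alg S (E R 2 1).
  by rewrite (I3 p q h0); apply: ga_scale; apply: ga_mul.
have g31 : gen_alg S (E R 3 1).
  by rewrite (I4 p q h0); apply: ga_scale; apply: ga_mul.
have gX : gen_alg S (Xm p q) by rewrite (IX lam); apply: ga_mul => //; apply: ga_mul.
have gY : gen_alg S (Ym p q) by rewrite (IY lam); apply: ga_mul => //; apply: ga_mul.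
do !split => //.
- by rewrite (I5 lam p q); apply: glc; [apply: ga_mul|apply: glc].
- by rewrite (I7 lam p q); apply: glc; [apply: ga_mul| rewrite -IY].
- by rewrite (I6 lam p q); apply: glc; [apply: ga_mul| rewrite -IX].
Qed.

Definition Pat (R : realFieldType) (z1 z2 : bool) (A : 'M[R]_4) :=
  [/\ A (inord 0) (inord 1) = 0, A (inord 0) (inord 2) = 0, A (inord 0) (inord 3) = 0,
      A (inord 1) (inord 3) = 0 & A (inord 2) (inord 3) = 0] /\
  [/\ A (inord 3) (inord 3) = 0, (z1 -> A (inord 1) (inord 2) = 0)
    & (z2 -> A (inord 2) (inord 1) = 0)].

Lemma pat_add (R : realFieldType) z1 z2 (A B : 'M[R]_4) :
  Pat z1 z2 A -> Pat z1 z2 B -> Pat z1 z2 (A + B).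
Proof.
move=> [[a1 a2 a3 a4 a5] [a6 a7 a8]] [[b1 b2 b3 b4 b5] [b6 b7 b8]].
split; split; rewrite ?mxE.
all: try by move=> hz; rewrite (a7 hz) (b7 hz) addr0.
all: try by move=> hz; rewrite (a8 hz) (b8 hz) addr0.
all: by rewrite ?a1 ?a2 ?a3 ?a4 ?a5 ?a6 ?b1 ?b2 ?b3 ?b4 ?b5 ?b6 addr0.
Qed.

Lemma pat_scale (R : realFieldType) z1 z2 (c : R) (A : 'M[R]_4) :
  Pat z1 z2 A -> Pat z1 z2 (c *: A).
Proof.
move=> [[a1 a2 a3 a4 a5] [a6 a7 a8]].
split; split; rewrite ?mxE.
all: try by move=> hz; rewrite (a7 hz) mulr0.
all: try by move=> hz; rewrite (a8 hz) mulr0.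
all: by rewrite ?a1 ?a2 ?a3 ?a4 ?a5 ?a6 mulr0.
Qed.

Lemma pat_mul (R : realFieldType) z1 z2 (A B : 'M[R]_4) :
  Pat z1 z2 A -> Pat z1 z2 B -> Pat z1 z2 (A *m B).
Proof.
move=> [[a1 a2 a3 a4 a5] [a6 a7 a8]] [[b1 b2 b3 b4 b5] [b6 b7 b8]].
split; split; rewrite ?mxE ?sum4.
all: try by move=> hz; rewrite ?(a7 hz) ?(b7 hz) ?(a8 hz) ?(b8 hz)
   ?a1 ?a2 ?a3 ?a4 ?a5 ?a6 ?b1 ?b2 ?b3 ?b4 ?b5 ?b6; simp0.
all: by rewrite ?a1 ?a2 ?a3 ?a4 ?a5 ?a6 ?b1 ?b2 ?b3 ?b4 ?b5 ?b6; simp0.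
Qed.


Lemma pat_lo (R : realFieldType) (lam : R) (z1 z2 : bool) : Pat z1 z2 (Lo lam).
Proof. rewrite /Lo /Pat; split; split => *; ent. Qed.

Lemma pat_la (R : realFieldType) (lam p q : R) (z1 z2 : bool) :
  (z1 -> p = 0) -> Pat z1 z2 (La lam p q).
Proof. move=> hz; rewrite /La /Pat; split; split => *; ent; by rewrite hz. Qed.

Lemma pat_lb (R : realFieldType) (lam p q : R) (z1 z2 : bool) :
  (z2 -> q = 0) -> Pat z1 z2 (Lb lam p q).
Proof. move=> hz; rewrite /Lb /Pat; split; split => *; ent; by rewrite hz. Qed.

Definition M0of (R : realFieldType) (A : 'M[R]_4) :=
  A (inord 0) (inord 0) *: E R 1 1 + A (inord 1) (inord 0) *: E R 2 1
  + A (inord 1) (inord 1) *: E R 2 2 + A (inord 2) (inord 0) *: E R 3 1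
  + A (inord 2) (inord 2) *: E R 3 3 + A (inord 3) (inord 0) *: E R 4 1
  + A (inord 3) (inord 1) *: E R 4 2 + A (inord 3) (inord 2) *: E R 4 3.

Lemma M0of_in (R : realFieldType) (A : 'M[R]_4) : inM0 (M0of A).
Proof. by do 8 eexists. Qed.

Lemma pat_decomp (R : realFieldType) (z1 z2 : bool) (A : 'M[R]_4) : Pat z1 z2 A ->
  A = M0of A + A (inord 1) (inord 2) *: E R 2 3 + A (inord 2) (inord 1) *: E R 3 2.
Proof.
move=> [[a1 a2 a3 a4 a5] [a6 _ _]].
rewrite /M0of; apply/matrixP; intros a b.
rewrite ?mxE ?eqi // ?inordK //; revert a b.
case=> [[|[|[|[|?]]]] ?]; case=> [[|[|[|[|?]]]] ?] //=; simp0; rewrite ordI ordI //.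
Qed.

Lemma pat_inM0 (R : realFieldType) (A : 'M[R]_4) : Pat true true A -> inM0 A.
Proof.
move=> hA; rewrite (pat_decomp hA).
case: hA => [_ [_ h1 h2]]; rewrite h1 // h2 //; rewrite !scale0r !addr0; exact: M0of_in.
Qed.

Lemma pat_inM1 (R : realFieldType) (A : 'M[R]_4) : Pat false true A -> inM1 A.
Proof.
move=> hA; rewrite (pat_decomp hA).
case: hA => [_ [_ _ h2]]; rewrite h2 //; rewrite !scale0r !addr0.
exists (M0of A), (A (inord 1) (inord 2)); split => //; exact: M0of_in.
Qed.

Lemma pat_inM2 (R : realFieldType) (A : 'M[R]_4) : Pat true false A -> inM2 A.
Proof.
move=> hA; rewrite (pat_decomp hA).
case: hA => [_ [_ h1 _]]; rewrite h1 //; rewrite !scale0r !addr0.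
exists (M0of A), (A (inord 2) (inord 1)); split => //; exact: M0of_in.
Qed.

Lemma pat_inM3 (R : realFieldType) (A : 'M[R]_4) : Pat false false A -> inM3 A.
Proof.
move=> hA; rewrite (pat_decomp hA).
exists (M0of A), (A (inord 1) (inord 2)), (A (inord 2) (inord 1)); split => //; exact: M0of_in.
Qed.

Lemma inM0_pat (R : realFieldType) (z1 z2 : bool) (A : 'M[R]_4) : inM0 A -> Pat z1 z2 A.
Proof.
case=> [c1 [c2 [c3 [c4 [c5 [c6 [c7 [c8 ->]]]]]]]].
rewrite /Pat; split; split => *; ent.
Qed.

Lemma inM0_gen (R : realFieldType) (S : 'M[R]_4 -> Prop) B :
  gen_alg S (E R 1 1) -> gen_alg S (E R 2 1) -> gen_alg S (E R 2 2) ->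
  gen_alg S (E R 3 1) -> gen_alg S (E R 3 3) -> gen_alg S (E R 4 1) ->
  gen_alg S (E R 4 2) -> gen_alg S (E R 4 3) -> inM0 B -> gen_alg S B.
Proof.
move=> h1 h2 h3 h4 h5 h6 h7 h8 [c1 [c2 [c3 [c4 [c5 [c6 [c7 [c8 ->]]]]]]]].
do 7 (apply: ga_add; last by apply: ga_scale).
by apply: ga_scale.
Qed.

Unset Implicit Arguments. Set Strict Implicit.


Lemma fwd (R : realFieldType) (lam bet : R) (z1 z2 : bool) (A : 'M[R]_4) :
  (z1 -> (lam - bet) / lam = 0) -> (z2 -> (lam + bet - 1) / lam = 0) ->
  gen_alg (gens lam bet) A -> Pat z1 z2 A.
Proof.
move=> hp hq; elim.
- move=> B [->|[->|->]].
  + exact: (pat_lo lam z1 z2).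
  + exact: (@pat_la R lam ((lam - bet) / lam) ((lam + bet - 1) / lam) z1 z2 hp).
  + exact: (@pat_lb R lam ((lam - bet) / lam) ((lam + bet - 1) / lam) z1 z2 hq).
- by move=> ? ? _ h1 _ h2; apply: pat_add.
- by move=> ? ? _ h1; apply: pat_scale.
- by move=> ? ? _ h1 _ h2; apply: pat_mul.
Qed.

Lemma ff (P : Prop) : false -> P. Proof. by []. Qed.

Lemma zero_of (R : realFieldType) (x lam : R) : lam != 0 -> x * lam = 0 -> x = 0.
Proof. by move=> h /eqP; rewrite mulf_eq0 (negbTE h) orbF => /eqP. Qed.

Lemma nz_of (R : realFieldType) (x lam c : R) : c != 0 -> x * lam = c -> x != 0.
Proof. by move=> hc hx; apply/eqP => h; move: hc; rewrite -hx h mul0r eqxx. Qed.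

Theorem mainTheorem8 (R : realFieldType) (lam bet : R)
  (hl0 : 0 < lam) (hl1 : lam < 1) (hb0 : 0 < bet) (hb1 : bet < 1) :
  (lam = 1/2 /\ bet = 1/2 ->
     forall A : 'M[R]_4, gen_alg (gens lam bet) A <-> inM0 A) /\
  (lam <> bet /\ lam = 1 - bet ->
     forall A : 'M[R]_4, gen_alg (gens lam bet) A <-> inM1 A) /\
  (lam = bet /\ lam <> 1 - bet ->
     forall A : 'M[R]_4, gen_alg (gens lam bet) A <-> inM2 A) /\
  (lam <> bet /\ lam <> 1 - bet ->
     forall A : 'M[R]_4, gen_alg (gens lam bet) A <-> inM3 A).
Proof.
have h0 : lam != 0 by rewrite gt_eqF.
have h1 : 1 - lam != 0 by rewrite gt_eqF // subr_gt0.
have ep : (lam - bet) / lam * lam = lam - bet by field.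
have eq : (lam + bet - 1) / lam * lam = lam + bet - 1 by field.
have [b1 [b2 [b3 [b4 [b5 [b6 [gD [gX gY]]]]]]]] :=
  @mem_base R (gens lam bet) lam ((lam - bet) / lam) ((lam + bet - 1) / lam)
    ltac:(by left) ltac:(by right; left) ltac:(by right; right) h0 h1.
move: ep eq gX gY.
set p := (lam - bet) / lam; set q := (lam + bet - 1) / lam => ep eq gX gY.
have hp1 : p - 1 != 0.
  apply: (@nz_of _ _ lam (- bet)); first by rewrite oppr_eq0 gt_eqF.
  by rewrite mulrBl ep mul1r; ring.
have hq1 : q - 1 != 0.
  apply: (@nz_of _ _ lam (bet - 1)); first by rewrite subr_eq0 lt_eqF.
  by rewrite mulrBl eq mul1r; ring.
have hpq : p + q - 1 != 0.
  apply: (@nz_of _ _ lam (lam - 1)); first by rewrite subr_eq0 lt_eqF.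
  by rewrite !mulrDl ep eq mulN1r; ring.
have pz : lam = bet -> p = 0.
  by move=> e; apply: (@zero_of _ _ _ h0); rewrite ep e subrr.
have qz : lam = 1 - bet -> q = 0.
  by move=> e; apply: (@zero_of _ _ _ h0); rewrite eq e; ring.
have pnz : lam <> bet -> p != 0.
  move=> ne; apply: (@nz_of _ _ lam (lam - bet)) => //.
  by rewrite subr_eq0; apply/eqP.
have qnz : lam <> 1 - bet -> q != 0.
  move=> ne; apply: (@nz_of _ _ lam (lam + bet - 1)) => //.
  by apply/eqP => e'; apply: ne; lra.
have g33 : gen_alg (gens lam bet) (E R 2 2) -> gen_alg (gens lam bet) (E R 3 3).
  by move=> g; rewrite Cs; apply: glc.
have g22 : gen_alg (gens lam bet) (E R 3 3) -> gen_alg (gens lam bet) (E R 2 2).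
  by move=> g; rewrite Cs'; apply: glc.
split; [|split; [|split]].
- move=> [el eb] A.
  have e1 : lam = bet by rewrite el eb.
  have e2 : lam = 1 - bet by rewrite el eb; field.
  have P0 := pz e1; have Q0 := qz e2.
  have G22 : gen_alg (gens lam bet) (E R 2 2) by rewrite C1a; rewrite P0 Q0 in gX.
  split.
  + move=> hA; apply: pat_inM0; exact: (@fwd _ _ _ true true _ (fun _ => P0) (fun _ => Q0)).
  + by move=> hA; apply: inM0_gen => //; apply: g33.
- move=> [ne e] A.
  have Q0 := qz e; have P1 := pnz ne.
  have G22 : gen_alg (gens lam bet) (E R 2 2).
    by rewrite (C2a hp1); apply: glc => //; rewrite -Q0.
  split.
  + move=> hA; apply: pat_inM1; exact: (@fwd _ _ _ false true _ (@ff _) (fun _ => Q0)).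
  + move=> [B [d [hB ->]]]; apply: ga_add; first by apply: inM0_gen => //; apply: g33.
    by apply: ga_scale; rewrite (C2b P1); apply: glc => //; rewrite -Q0.
- move=> [e ne] A.
  have P0 := pz e; have Q1 := qnz ne.
  have G33 : gen_alg (gens lam bet) (E R 3 3).
    by rewrite (C3a hq1); apply: glc => //; rewrite -P0.
  split.
  + move=> hA; apply: pat_inM2; exact: (@fwd _ _ _ true false _ (fun _ => P0) (@ff _)).
  + move=> [B [d [hB ->]]]; apply: ga_add; first by apply: inM0_gen => //; apply: g22.
    by apply: ga_scale; rewrite (C3b Q1); apply: glc => //; rewrite -P0.
- move=> [ne1 ne2] A.
  have P1 := pnz ne1; have Q1 := qnz ne2.
  have G22 : gen_alg (gens lam bet) (E R 2 2).
    rewrite (C4a hpq); apply: glc; first by apply: glc.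
    by apply: ga_mul; apply: glc.
  split.
  + move=> hA; apply: pat_inM3; exact: (@fwd _ _ _ false false _ (@ff _) (@ff _) hA).
  + move=> [B [d [e [hB ->]]]]; apply: ga_add; [apply: ga_add|].
    * by apply: inM0_gen => //; apply: g33.
    * by apply: ga_scale; rewrite (C4b q P1); apply: glc => //; apply: glc.
    * by apply: ga_scale; rewrite (C4c p Q1); apply: glc => //; [apply: glc | apply: g33].
Qed.
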